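(* Let $k\ge 2$ and let $G$ be a group that is the free product of the cyclic groups generated by $\tau,\sigma_1,\dots,\sigma_{k-1}$, where the order of $\tau$ is infinite or divisible by $3$ and the order of each $\sigma_i$ is infinite or divisible by $2$. Let $(X,m)$ be a probability space on which $G$ acts by $m$-preserving transformations, freely on a set of full measure. Consider colourings $c:X\to\{A_1,A_2,A_3\}$ (indices taken modulo $3$) and the following rule at a point $x$: let $i$ be such that $c(\tau^{-1}x)=A_i$. If $c(\tau x)\in\{A_i,A_{i+1}\}$, then $x$ must be coloured $A_{i+1}$. If $c(\tau x)=A_{i-1}$, let $n$ be the number of points among $\tau x,\tau^{-1}x,\sigma_1x,\dots,\sigma_{k-1}x$ coloured $A_1$; if $0<n<k$ then $x$ must be coloured $c(\tau x)$, and otherwise $x$ must be coloured $A_{i+1}$. Then this colouring rule is paradoxical.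
   Context: A colouring satisfies the rule if the rule holds at $m$-almost every $x$. The rule is paradoxical if (a) some colouring of $X$ (not necessarily measurable) satisfies it, and (b) there is no pair $(\mu,c)$ where $\mu$ is a finitely additive $G$-invariant probability measure defined on a $G$-invariant algebra $\mathcal{B}$ of subsets of $X$ containing all $m$-measurable sets and extending $m$, and $c$ is a colouring satisfying the rule with $c^{-1}(A_j)\in\mathcal{B}$ for $j=1,2,3$. *)

(* Defs.v *)
From HB Require Import structures.
From mathcomp Require Import all_boot all_order all_algebra.
From mathcomp Require Import all_classical all_reals all_analysis.
Set Implicit Arguments. Unset Strict Implicit. Unset Printing Implicit Defensive.
Import Order.TTheory GRing.Theory Num.Theory.
Local Open Scope classical_set_scope.
Local Open Scope ring_scope.

(* Free product of cyclic groups with generators g_0 (= tau), g_1 .. g_(k-1)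
   (= sigma_1 .. sigma_(k-1)) of orders ord i (ord i = 0 means infinite order).
   Its elements are the reduced words: sequences of pairs (i, e) with i < k,
   e a nonzero integer exponent, normalised to 0 < e < ord i when ord i is
   finite, and with consecutive letters having distinct generator indices. *)

Definition letter_ok (k : nat) (ord : nat -> nat) (p : nat * int) : bool :=
  [&& (p.1 < k)%N, p.2 != 0 & (ord p.1 == 0)%N || (0 < p.2 < (ord p.1)%:Z)].

Definition reduced_word (k : nat) (ord : nat -> nat) (w : seq (nat * int)) : bool :=
  all (letter_ok k ord) w && sorted (fun p q : nat * int => p.1 != q.1) w.

Section Action.
Variable X : Type.
Variables t tinv : nat -> X -> X.

Definition gen_pow (i : nat) (e : int) : X -> X :=
  match e with
  | Posz n => iter n (t i)
  | Negz n => iter n.+1 (tinv i)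
  end.

Definition word_act (w : seq (nat * int)) : X -> X :=
  foldr (fun p f => gen_pow p.1 p.2 \o f) id w.

(* The colouring rule at x; colours A_1, A_2, A_3 are 0, 1, 2 in 'I_3,
   indices modulo 3.  tau = t 0, tau^{-1} = tinv 0, sigma_j = t j. *)
Definition col_next (i : 'I_3) : 'I_3 := inZp i.+1.

Definition count_A1 (k : nat) (c : X -> 'I_3) (x : X) : nat :=
  ((c (t 0 x) == ord0) + (c (tinv 0 x) == ord0)
   + \sum_(1 <= j < k) (c (t j x) == ord0))%N.

Definition colour_rule (k : nat) (c : X -> 'I_3) (x : X) : Prop :=
  let i := c (tinv 0 x) in
  let ct := c (t 0 x) in
  if (ct == i) || (ct == col_next i) then c x = col_next i
  else
    if (0 < count_A1 k c x < k)%N then c x = ct else c x = col_next i.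
End Action.

Section Paradox.
Context {R : realType} {d : measure_display} {X : measurableType d}.

Definition set_algebra (B : set (set X)) : Prop :=
  [/\ B set0, (forall A, B A -> B (~` A)) &
      (forall A C, B A -> B C -> B (A `|` C))].

Definition fin_add_prob (B : set (set X)) (mu : set X -> R) : Prop :=
  [/\ (forall A, B A -> 0 <= mu A), mu setT = 1 &
      (forall A C, B A -> B C -> A `&` C = set0 -> mu (A `|` C) = mu A + mu C)].

Definition satisfies_rule (m : probability X R) (k : nat) (t tinv : nat -> X -> X)
  (c : X -> 'I_3) : Prop :=
  {ae m, forall x, colour_rule t tinv k c x}.

Definition paradoxical_rule (m : probability X R) (k : nat) (ord : nat -> nat)
  (t tinv : nat -> X -> X) : Prop :=
  (exists c : X -> 'I_3, satisfies_rule m k t tinv c) /\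
  ~ (exists (B : set (set X)) (mu : set X -> R) (c : X -> 'I_3),
      [/\ set_algebra B, fin_add_prob B mu,
          (forall w, reduced_word k ord w -> forall A, B A ->
              B (word_act t tinv w @^-1` A) /\ mu (word_act t tinv w @^-1` A) = mu A),
          (forall A, measurable A -> B A /\ (mu A)%:E = m A) &
          satisfies_rule m k t tinv c /\
          (forall j : 'I_3, B (c @^-1` [set j]))]).
End Paradox.

(* Main.v *)
Require Import Defs.
From HB Require Import structures.
From mathcomp Require Import all_boot all_order all_algebra.
From mathcomp Require Import all_classical all_reals all_analysis.
From mathcomp Require Import zify ring lra.
Import Order.TTheory GRing.Theory Num.Theory.
Local Open Scope classical_set_scope.
Local Open Scope ring_scope.

Set Implicit Arguments. Unset Strict Implicit. Unset Printing Implicit Defensive.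

Lemma modz_dvdn (e : int) (d n : nat) : (d %| n)%N ->
  modz (modz e n%:Z) d%:Z = modz e d%:Z.
Proof.
move=> /dvdnP [q ->].
rewrite [in RHS](divz_eq e (q * d)%N%:Z).
by rewrite PoszM mulrA modzMDl.
Qed.

Section Words.
Variables (X : Type) (k : nat) (ord : nat -> nat) (t tinv : nat -> X -> X).
Hypothesis ht_inv : forall i, (i < k)%N -> cancel (t i) (tinv i) /\ cancel (tinv i) (t i).
Hypothesis ht_ord : forall i, (i < k)%N -> (0 < ord i)%N -> iter (ord i) (t i) =1 id.

Lemma gp_succ i e x : (i < k)%N -> gen_pow t tinv i (e + 1) x = t i (gen_pow t tinv i e x).
Proof.
move=> ik; case: e => [n|n] /=.
  by rewrite addn1.
case: n => [|n] /=.
  by rewrite (proj2 (ht_inv ik)).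
rewrite (proj2 (ht_inv ik)).
by rewrite subn1.
Qed.

Lemma gp_pred i e x : (i < k)%N -> gen_pow t tinv i (e - 1) x = tinv i (gen_pow t tinv i e x).
Proof.
move=> ik; rewrite -{2}(subrK 1 e) gp_succ //.
by rewrite (proj1 (ht_inv ik)).
Qed.

Lemma gp_addn i e n x : (i < k)%N ->
  gen_pow t tinv i (e + n%:Z) x = iter n (t i) (gen_pow t tinv i e x).
Proof.
move=> ik; elim: n => [|n IH]; first by rewrite addr0.
by rewrite -addn1 PoszD addrA gp_succ // IH addn1.
Qed.

Lemma gp_mulord i e q x : (i < k)%N ->
  gen_pow t tinv i (e + q%:Z * (ord i)%:Z) x = gen_pow t tinv i e x.
Proof.
move=> ik; case: (posnP (ord i)) => [->|op]; first by rewrite mulr0 addr0.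
elim: q => [|q IH]; first by rewrite mul0r addr0.
rewrite -addn1 PoszD mulrDl mul1r addrA gp_addn //.
by rewrite (ht_ord ik op) IH.
Qed.

Lemma gp_zmul i e z x : (i < k)%N ->
  gen_pow t tinv i (e + z * (ord i)%:Z) x = gen_pow t tinv i e x.
Proof.
move=> ik; case: z => [q|q]; first exact: gp_mulord.
rewrite NegzE mulNr.
rewrite -[in RHS](subrK (q.+1%:Z * (ord i)%:Z) e).
by rewrite gp_mulord.
Qed.

Definition nrm i (e : int) : int := modz e (ord i)%:Z.

Lemma gp_nrm i e x : (i < k)%N -> gen_pow t tinv i (nrm i e) x = gen_pow t tinv i e x.
Proof.
move=> ik; rewrite /nrm.
have -> : modz e (ord i)%:Z = e + (- (divz e (ord i)%:Z)) * (ord i)%:Z.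
  by rewrite {2}(divz_eq e (ord i)%:Z) mulNr addrC addrA addNr add0r.
exact: gp_zmul.
Qed.

Definition stepf (a : nat * bool) : X -> X := if a.2 then t a.1 else tinv a.1.
Definition dl (b : bool) : int := if b then 1 else -1.

Definition Lw (a : nat * bool) (w : seq (nat * int)) : seq (nat * int) :=
  match w with
  | (j, e) :: w' => if j == a.1 then
                      (if nrm j (e + dl a.2) == 0 then w' else (j, nrm j (e + dl a.2)) :: w')
                    else (a.1, nrm a.1 (dl a.2)) :: w
  | [::] => [:: (a.1, nrm a.1 (dl a.2))]
  end.

Lemma gp_dl i b e x : (i < k)%N ->
  gen_pow t tinv i (e + dl b) x = stepf (i, b) (gen_pow t tinv i e x).
Proof. by move=> ik; case: b; rewrite /= ?gp_succ ?gp_pred. Qed.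

Lemma gp0 i x : gen_pow t tinv i 0 x = x. Proof. by []. Qed.

Lemma Lw_act a w x : (a.1 < k)%N ->
  word_act t tinv (Lw a w) x = stepf a (word_act t tinv w x).
Proof.
case: a => i b /= ik; case: w => [|[j e] w] /=.
  by rewrite gp_nrm // -(add0r (dl b)) gp_dl.
case: eqP => [->|ji] /=.
  case: eqP => [h0|hn0] /=.
    by rewrite -gp_dl // -gp_nrm // h0.
  by rewrite gp_nrm // gp_dl.
by rewrite gp_nrm // -(add0r (dl b)) gp_dl.
Qed.

Hypothesis hord1 : forall i, (i < k)%N -> ord i != 1%N.

Lemma nrm_ok i e : (i < k)%N -> nrm i e != 0 -> letter_ok k ord (i, nrm i e).
Proof.
move=> ik n0; rewrite /letter_ok /= ik n0 /=.
case: (posnP (ord i)) => [->//|op]; apply/orP; right.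
rewrite lt0r n0 modz_ge0 /= ?ltz_pmod //.
by rewrite eqz_nat -lt0n.
Qed.

Lemma nrm_id i e : letter_ok k ord (i, e) -> nrm i e = e.
Proof.
rewrite /letter_ok /nrm /= => /and3P [_ e0 /orP [/eqP -> | h]]; first by rewrite modz0.
by rewrite modz_small // (andP h).2 andbT ltW // (andP h).1.
Qed.

Lemma nrmDl i e f : nrm i (nrm i e + f) = nrm i (e + f).
Proof. by rewrite /nrm modzDml. Qed.

Lemma nrm0 i : nrm i 0 = 0.
Proof. by rewrite /nrm mod0z. Qed.

Lemma nrm_dl i b : (i < k)%N -> nrm i (dl b) != 0.
Proof.
move=> ik; apply/eqP => /dvdz_mod0P.
have h1 := hord1 ik.
case: b => /=; rewrite ?dvdzN => h; have : (ord i %| 1)%N by exact: h.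
all: by rewrite dvdn1 (negbTE h1).
Qed.

Definition rel1 (p q : nat * int) := p.1 != q.1.

Lemma Lw_red a w : (a.1 < k)%N -> reduced_word k ord w -> reduced_word k ord (Lw a w).
Proof.
case: a => i b /= ik; case: w => [|[j e] w] /=.
  by move=> _; rewrite /reduced_word /= nrm_ok // nrm_dl.
rewrite /reduced_word /= => /andP [/andP [okj okw] srt].
case: eqP => [eji|nji].
  subst j; case: eqP => [h0|hn0].
    by rewrite okw (path_sorted srt).
  rewrite /= nrm_ok //; last exact/eqP.
  rewrite okw /=; case: w srt {okw} => [|[j2 e2] w] //=.
rewrite /= nrm_ok ?nrm_dl // okj okw /= srt andbT.
by apply/eqP => h; apply: nji.
Qed.

Lemma dlN b : dl (~~ b) = - dl b.
Proof. by case: b. Qed.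

Lemma Lw_inv a w : (a.1 < k)%N -> reduced_word k ord w -> Lw (a.1, ~~ a.2) (Lw a w) = w.
Proof.
case: a => i b /= ik; case: w => [|[j e] w] /=.
  by move=> _; rewrite eqxx /= nrmDl dlN subrr nrm0 eqxx.
rewrite /reduced_word /= => /andP [/andP [okj okw] srt].
case: eqP => [eji|nji].
  subst j; case: eqP => [h0|hn0].
    case: w srt {okw} => [|[j2 e2] w] /=.
      move=> _; congr ((_, _) :: _).
      by rewrite -(nrm_id okj) -(addrK (dl b) e) -nrmDl h0 add0r dlN.
    move=> /andP [nj2 _]; rewrite eq_sym (negbTE nj2).
    congr ((_, _) :: _).
    by rewrite -(nrm_id okj) -(addrK (dl b) e) -nrmDl h0 add0r dlN.
  rewrite /= eqxx nrmDl dlN addrK nrm_id //.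
  by move: okj; rewrite /letter_ok /= => /and3P [_ /negbTE -> _].
by rewrite /= eqxx nrmDl dlN subrr nrm0 eqxx.
Qed.

Definition valid (p : seq (nat * bool)) := all (fun a : nat * bool => (a.1 < k)%N) p.
Definition pact (p : seq (nat * bool)) : X -> X := foldr (fun a f => stepf a \o f) id p.
Definition Lf (p : seq (nat * bool)) w := foldr Lw w p.
Definition red p := Lf p [::].
Definition pinv (p : seq (nat * bool)) := rev (map (fun a : nat * bool => (a.1, ~~ a.2)) p).

Lemma Lf_red p w : valid p -> reduced_word k ord w -> reduced_word k ord (Lf p w).
Proof.
elim: p => [//|a p IH] /= /andP [ha vp] rw.
by apply: Lw_red => //; apply: IH.
Qed.

Lemma red_red p : valid p -> reduced_word k ord (red p).
Proof. by move=> vp; apply: Lf_red. Qed.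

Lemma Lf_act p w x : valid p -> word_act t tinv (Lf p w) x = pact p (word_act t tinv w x).
Proof.
elim: p => [//|a p IH] /= /andP [ha vp].
by rewrite Lw_act // IH.
Qed.

Lemma pact_cat p q x : pact (p ++ q) x = pact p (pact q x).
Proof. by elim: p => [//|a p IH] /=; rewrite IH. Qed.

Lemma Lf_cat p q w : Lf (p ++ q) w = Lf p (Lf q w).
Proof. by rewrite /Lf foldr_cat. Qed.

Lemma pinv_cons a p : pinv (a :: p) = pinv p ++ [:: (a.1, ~~ a.2)].
Proof. by rewrite /pinv /= rev_cons cats1. Qed.

Lemma valid_pinv p : valid p -> valid (pinv p).
Proof. by rewrite /valid /pinv all_rev all_map. Qed.

Lemma valid_cat p q : valid (p ++ q) = valid p && valid q.
Proof. by rewrite /valid all_cat. Qed.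

Lemma pinvK p : pinv (pinv p) = p.
Proof.
rewrite /pinv map_rev revK -map_comp.
by elim: p => [//|[i b] p IH] /=; rewrite negbK IH.
Qed.

Lemma Lf_pinv q w : valid q -> reduced_word k ord w -> Lf q (Lf (pinv q) w) = w.
Proof.
elim: q w => [//|[i b] q IH] w /= /andP [ik vq] rw.
rewrite pinv_cons Lf_cat /= IH //; last by apply: Lw_red.
by have /= := @Lw_inv (i, ~~ b) w ik rw; rewrite negbK.
Qed.

Lemma pact_pinv q x : valid q -> pact q (pact (pinv q) x) = x.
Proof.
elim: q x => [//|[i b] q IH] x /= /andP [ik vq].
rewrite pinv_cons pact_cat /= IH //.
by case: b; rewrite /stepf /= ?(proj1 (ht_inv ik)) ?(proj2 (ht_inv ik)).
Qed.

Lemma pinv_pact q x : valid q -> pact (pinv q) (pact q x) = x.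
Proof.
move=> vq; have := @pact_pinv (pinv q) x; rewrite pinvK; apply.
exact: valid_pinv.
Qed.

Lemma red_uniq r p q :
  (forall w, reduced_word k ord w -> w != [::] -> word_act t tinv w r <> r) ->
  valid p -> valid q -> pact p r = pact q r -> red p = red q.
Proof.
move=> fr vp vq e.
set z := Lf (pinv q) (red p).
have rz : reduced_word k ord z by apply: Lf_red; [exact: valid_pinv | exact: red_red].
have az : word_act t tinv z r = r.
  by rewrite /z Lf_act ?valid_pinv // /red Lf_act //= e pinv_pact.
have z0 : z = [::].
  by apply/eqP; apply/negPn/negP => nz; exact: (fr z rz nz az).
have -> : red q = Lf q z by rewrite z0.
by rewrite /z Lf_pinv //; exact: red_red.
Qed.

Definition z3 (v : int) : int := modz v 3.
Definition par (e : int) : bool := modz e 2 == 1.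
Definition flipz (v : int) : int := if z3 v == 0 then 1 else 0.
Fixpoint fc (w : seq (nat * int)) : int :=
  match w with
  | [::] => 0
  | (i, e) :: w' => if i == 0%N then fc w' + e else if par e then flipz (fc w') else fc w'
  end.

Lemma z3Dr a b : z3 (a + z3 b) = z3 (a + b).
Proof. by rewrite /z3 modzDmr. Qed.

Hypothesis h3 : (3 %| ord 0)%N.
Hypothesis h2 : forall j, (1 <= j < k)%N -> (2 %| ord j)%N.

Lemma z3_nrm a e : z3 (a + nrm 0%N e) = z3 (a + e).
Proof. by rewrite -z3Dr -[in RHS]z3Dr /z3 /nrm modz_dvdn. Qed.

Lemma par_nrm j e : (1 <= j < k)%N -> par (nrm j e) = par e.
Proof. by move=> hj; rewrite /par /nrm modz_dvdn // h2. Qed.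

Lemma parS e : par (e + 1) = ~~ par e.
Proof.
rewrite /par -modzDml.
have : 0 <= modz e 2 < 2 by rewrite modz_ge0 // ltz_pmod.
by case/andP => h0 h1; have [->|->] : modz e 2 = 0 \/ modz e 2 = 1 by lia.
Qed.

Lemma flip0 v : (z3 (flipz v) == 0) = ~~ (z3 v == 0).
Proof. by rewrite /flipz; case: ifP. Qed.

Lemma fc_tau w : reduced_word k ord w -> z3 (fc (Lw (0%N, true) w)) = z3 (fc w + 1).
Proof.
case: w => [|[j e] w] /=; first by rewrite ?eqxx z3_nrm.
move=> _; case: eqP => [->|nj] /=.
  case: eqP => [h0|hn0] /=.
    have : z3 (e + 1) = 0 by rewrite -(add0r (e + 1)) -z3_nrm h0.
    by move=> he; rewrite -addrA -z3Dr he addr0.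
  by rewrite ?eqxx z3_nrm addrA.
by move/eqP/negbTE: nj => ->; rewrite z3_nrm.
Qed.

Lemma fc_sig j w : (1 <= j < k)%N -> reduced_word k ord w ->
  (z3 (fc (Lw (j, true) w)) == 0) = ~~ (z3 (fc w) == 0).
Proof.
move=> hj; have jn0 : (j == 0%N) = false by case: j hj.
case: w => [|[j2 e] w] /=; first by rewrite jn0 par_nrm // flip0.
move=> _; case: (j2 =P j) => [->|nj] /=.
  case: (nrm j (e + 1) =P 0) => [h0|hn0] /=.
    have pe : par e.
      have := parS e; rewrite -(par_nrm _ hj) h0 /par mod0z.
      by case: (modz e 2 == 1).
    by rewrite jn0 pe flip0 negbK.
  rewrite jn0 par_nrm // parS.
  by case: (par e) => /=; rewrite ?flip0 ?negbK.
by rewrite jn0 par_nrm // flip0.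
Qed.

End Words.


Definition opick {T} (A : set T) : option T :=
  match pselect (exists y, A y) with
  | left h => Some (projT1 (cid h))
  | right _ => None
  end.

Lemma opickP T (A : set T) : (exists y, A y) -> exists y, opick A = Some y /\ A y.
Proof.
move=> h; rewrite /opick; case: pselect => [h'|//].
by exists (projT1 (cid h')); split => //; exact: (projT2 (cid h')).
Qed.

Lemma opick_some T (A : set T) y : opick A = Some y -> A y.
Proof.
rewrite /opick; case: pselect => [h'|//] [<-].
exact: (projT2 (cid h')).
Qed.

Definition colz (v : int) : 'I_3 := inZp (absz (z3 v)).

Lemma col_z3 u : colz (z3 u) = colz u.
Proof. by rewrite /colz /z3 modz_mod. Qed.

Lemma z3Dl a b : z3 (z3 a + b) = z3 (a + b).
Proof. by rewrite /z3 modzDml. Qed.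

Lemma col_eq0 u : (colz u == ord0) = (z3 u == 0).
Proof.
rewrite /colz /z3; apply/eqP/eqP => [h|->]; last by apply: val_inj.
have := congr1 val h; rewrite /= modn_small; last first.
  by rewrite -ltz_nat gez0_abs ?modz_ge0 ?ltz_pmod.
by move=> /eqP; rewrite absz_eq0 => /eqP.
Qed.

Section Colour.
Variables (X : Type) (k : nat) (ord : nat -> nat) (t tinv : nat -> X -> X).
Hypothesis ht_inv : forall i, (i < k)%N -> cancel (t i) (tinv i) /\ cancel (tinv i) (t i).
Hypothesis ht_ord : forall i, (i < k)%N -> (0 < ord i)%N -> iter (ord i) (t i) =1 id.
Hypothesis hord1 : forall i, (i < k)%N -> ord i != 1%N.
Hypothesis h3 : (3 %| ord 0)%N.
Hypothesis h2 : forall j, (1 <= j < k)%N -> (2 %| ord j)%N.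
Hypothesis hk : (2 <= k)%N.

Definition gorbit x := [set y | exists p, valid k p /\ pact t tinv p x = y].
Definition freeS := [set x | forall w, reduced_word k ord w -> w != [::] ->
  word_act t tinv w x <> x].

Definition colour x : 'I_3 :=
  match opick (gorbit x `&` freeS) with
  | Some r => match opick [set p | valid k p /\ pact t tinv p r = x] with
              | Some p => colz (fc (red ord p))
              | None => ord0
              end
  | None => ord0
  end.

Lemma orbit_eq x y : gorbit x y -> gorbit y = gorbit x.
Proof.
move=> [p [vp <-]]; apply/seteqP; split => z [q [vq <-]].
  by exists (q ++ p); rewrite valid_cat vq vp pact_cat.
exists (q ++ pinv p); rewrite valid_cat vq valid_pinv // pact_cat (pinv_pact ht_inv) //.
Qed.

Lemma colour_spec x r p : opick (gorbit x `&` freeS) = Some r ->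
  valid k p -> pact t tinv p r = x -> colour x = colz (fc (red ord p)).
Proof.
move=> hr vp e; have [_ fr] := opick_some hr.
rewrite /colour hr.
have [q [-> [vq eq]]] := opickP (ex_intro (fun p => valid k p /\ pact t tinv p r = x) p (conj vp e)).
congr (colz (fc _)); apply: (red_uniq ht_inv ht_ord hord1 fr) => //.
by rewrite eq e.
Qed.


Lemma colour_rule_free x : freeS x -> colour_rule t tinv k colour x.
Proof.
move=> fx.
have [r [hr [[q [vq eq]] fr]]] := opickP (ex_intro (gorbit x `&` freeS) x (conj (ex_intro _ [::] (conj isT erefl)) fx)).
set p := pinv q.
have vp : valid k p by exact: valid_pinv.
have ep : pact t tinv p r = x by rewrite -eq (pinv_pact ht_inv).
have nb a : (a.1 < k)%N -> colour (stepf t tinv a x) = colz (fc (Lw ord a (red ord p))).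
  move=> ha.
  have oy : gorbit x (stepf t tinv a x) by exists [:: a]; rewrite /valid /= ha.
  apply: (@colour_spec _ r (a :: p)); last by rewrite /= ep.
    by rewrite (orbit_eq oy).
  by rewrite /valid /= ha.
have k0 : (0 < k)%N by apply: leq_trans hk.
have rw : reduced_word k ord (red ord p) by exact: (red_red hord1).
set v := fc (red ord p).
have hx : colour x = colz v by exact: (colour_spec hr vp ep).
have ht : colour (t 0 x) = colz (v + 1).
  by rewrite -[t 0 x]/(stepf t tinv (0%N, true) x) nb // -col_z3 (fc_tau h3 rw) col_z3.
have hti : colour (tinv 0 x) = colz (v - 1).
  rewrite -[tinv 0 x]/(stepf t tinv (0%N, false) x) nb //.
  set w0 := Lw ord (0%N, false) (red ord p).
  have rw0 : reduced_word k ord w0 by exact: (Lw_red hord1).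
  have e0 : Lw ord (0%N, true) w0 = red ord p by exact: (@Lw_inv k ord (0%N, false)).
  have := fc_tau h3 rw0; rewrite e0 -/v => hv.
  rewrite -col_z3 -[in RHS]col_z3; congr colz.
  by rewrite -[fc w0](addrK 1) -(z3Dl (fc w0 + 1)) -hv z3Dl.
have hs j : (1 <= j < k)%N -> (colour (t j x) == ord0) = ~~ (z3 v == 0).
  move=> hj; rewrite -[t j x]/(stepf t tinv (j, true) x) nb; last by case/andP: hj.
  by rewrite col_eq0 (fc_sig h3 h2 hj rw).
rewrite /colour_rule /count_A1.
rewrite (@eq_big_nat _ _ _ 1 k _ (fun j => nat_of_bool (~~ (z3 v == 0)))); last by move=> j hj; rewrite hs.
rewrite sum_nat_const_nat.
rewrite hx ht hti.
rewrite -[colz v]col_z3 -[colz (v + 1)]col_z3 -[colz (v - 1)]col_z3 -z3Dl -[z3 (v - 1)]z3Dl.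
have : 0 <= z3 v < 3 by rewrite /z3 modz_ge0 // ltz_pmod.
case/andP => hv0 hv3.
have [->|[->|->]] : z3 v = 0 \/ z3 v = 1 \/ z3 v = 2 by lia.
- rewrite (_ : (colz (z3 (0 + 1)) == colz (z3 (0 - 1))) = false) //.
  rewrite (_ : (colz (z3 (0 + 1)) == col_next (colz (z3 (0 - 1)))) = false) //=.
  case: ifP => [hh|_]; [exfalso; move: hh; lia | by apply: val_inj].
- rewrite (_ : (colz (z3 (1 + 1)) == colz (z3 (1 - 1))) = false) //.
  rewrite (_ : (colz (z3 (1 + 1)) == col_next (colz (z3 (1 - 1)))) = false) //=.
  case: ifP => [hh|_]; [exfalso; move: hh; lia | by apply: val_inj].
- rewrite (_ : (colz (z3 (2 + 1)) == colz (z3 (2 - 1))) = false) //.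
  rewrite (_ : (colz (z3 (2 + 1)) == col_next (colz (z3 (2 - 1)))) = false) //=.
  case: ifP => [hh|_]; [exfalso; move: hh; lia | by apply: val_inj].
Qed.

End Colour.

Section Alg.
Context {R : realType} {T : Type}.
Variables (B : set (set T)) (mu : set T -> R).
Hypothesis alg : [/\ B set0, (forall A, B A -> B (~` A)) &
      (forall A C, B A -> B C -> B (A `|` C))].
Hypothesis fap : [/\ (forall A, B A -> 0 <= mu A), mu setT = 1 &
      (forall A C, B A -> B C -> A `&` C = set0 -> mu (A `|` C) = mu A + mu C)].

Lemma BC A : B A -> B (~` A). Proof. by case: alg => _ h _; apply: h. Qed.
Lemma BU A C : B A -> B C -> B (A `|` C). Proof. by case: alg => _ _ h; apply: h. Qed.
Lemma BI A C : B A -> B C -> B (A `&` C).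
Proof. by move=> hA hC; rewrite -[A `&` C]setCK setCI; apply/BC/BU; apply: BC. Qed.
Lemma BD A C : B A -> B C -> B (A `\` C).
Proof. by move=> hA hC; rewrite setDE; apply: BI => //; apply: BC. Qed.

Lemma mu_ge0 A : B A -> 0 <= mu A. Proof. by case: fap => h _ _; apply: h. Qed.
Lemma muU A C : B A -> B C -> A `&` C = set0 -> mu (A `|` C) = mu A + mu C.
Proof. by case: fap => _ _ h; apply: h. Qed.
Lemma muT : mu setT = 1. Proof. by case: fap. Qed.

Lemma mu_le A C : B A -> B C -> A `<=` C -> mu A <= mu C.
Proof.
move=> hA hC hAC; rewrite -(setDUK hAC) (muU hA (BD hC hA)); last first.
  by rewrite setDE setICA setICr setI0.
by rewrite lerDl mu_ge0 //; apply: BD.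
Qed.

Lemma mu_subadd A C : B A -> B C -> mu (A `|` C) <= mu A + mu C.
Proof.
move=> hA hC; have -> : A `|` C = A `|` (C `\` A).
  by rewrite setUDr setDv setD0.
rewrite (muU hA (BD hC hA)); last by rewrite setDE setICA setICr setI0.
rewrite lerD2l; apply: mu_le (BD hC hA) hC _ => z [].  by []. 
Qed.

Lemma muC A : B A -> mu (~` A) = 1 - mu A.
Proof.
move=> hA; rewrite -muT -(setUv A) (muU hA (BC hA)); last by rewrite setICr.
by rewrite [mu A + _]addrC addrK.
Qed.

Lemma mu_null_le P Q M : B P -> B Q -> B M -> mu M = 0 -> P `<=` Q `|` M -> mu P <= mu Q.
Proof.
move=> hP hQ hM m0 PQ; apply: (le_trans (mu_le hP (BU hQ hM) PQ)).
by apply: (le_trans (mu_subadd hQ hM)); rewrite m0 addr0.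
Qed.
End Alg.

Lemma next_neq (i : 'I_3) : col_next i != i.
Proof. by case: i => [[|[|[|n]]] h]. Qed.

Lemma next2_neq (a : 'I_3) : (col_next (col_next a) != a) && (col_next (col_next a) != col_next a).
Proof. by case: a => [[|[|[|n]]] h]. Qed.

Lemma trio (a : 'I_3) : ((col_next (col_next a) == ord0) + (a == ord0))%N = ~~ (col_next a == ord0).
Proof. by case: a => [[|[|[|n]]] h]. Qed.

Section Local.
Variables (X : Type) (k : nat) (t tinv : nat -> X -> X) (c : X -> 'I_3).

Lemma rule_neq y : colour_rule t tinv k c y -> c y != c (tinv 0 y).
Proof.
rewrite /colour_rule; case: ifP => [_ ->|/norP [h1 h2]]; first exact: next_neq.
by case: ifP => _ ->; rewrite ?next_neq // eq_sym.
Qed.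

Lemma good x : (forall y, tinv 0 (t 0 y) = y) -> (2 <= k)%N ->
  colour_rule t tinv k c x -> colour_rule t tinv k c (t 0 x) ->
  colour_rule t tinv k c (t 0 (t 0 x)) ->
  c (t 0 x) = col_next (c x) /\ ((c (t 1 x) == ord0) = ~~ (c x == ord0)).
Proof.
move=> tK hk r0 r1 r2.
have ned : c (t 0 (t 0 x)) != c (t 0 x) by have := rule_neq r2; rewrite tK.
have nba : c x != c (tinv 0 x) := rule_neq r0.
have hd : c (t 0 x) = col_next (c x).
  move: r1; rewrite /colour_rule tK; case: ifP => // _.
  by case: ifP => // _ h; move: ned; rewrite h eqxx.
split=> //.
move: r0; rewrite /colour_rule /count_A1 hd.
case: ifP => [/orP [/eqP h|/eqP h] hb|/norP [h1 h2]].
- by move: (next2_neq (c (tinv 0 x))); rewrite -hb h eqxx.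
- by rewrite hb in h; move: (next2_neq (c (tinv 0 x))); rewrite h eqxx andbF.
case: ifP => [_ h|hc hb].
  by move: (next_neq (c x)); rewrite -h eqxx.
move: hc; rewrite hb trio.
rewrite big_ltn //.
have hS : (\sum_(2 <= j < k) (c (t j x) == ord0) <= \sum_(2 <= j < k) 1)%N.
  by apply: leq_sum => j _; apply: leq_b1.
rewrite sum_nat_const_nat muln1 in hS.
move: hS; case: (c (t 1 x) == ord0); case: (col_next _ == ord0) => /=; lia.
Qed.
End Local.

Lemma fin3 (R : realType) (a b e : R) : a + b + e = 1 -> a <= b -> b <= e -> e <= a ->
  a <= 1 - a -> 1 - a <= a -> False.
Proof. move=> *; lra. Qed.

Unset Implicit Arguments. Set Strict Implicit.

Theorem proposition2 (R : realType) (d : measure_display) (X : measurableType d)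
  (m : probability X R) (k : nat) (hk : (2 <= k)%N) (ord : nat -> nat)
  (hord_tau : ord 0%N = 0%N \/ (0 < ord 0%N)%N /\ (3 %| ord 0%N)%N)
  (hord_sigma : forall i, (1 <= i < k)%N -> ord i = 0%N \/ (0 < ord i)%N /\ (2 %| ord i)%N)
  (t tinv : nat -> X -> X)
  (ht_inv : forall i, (i < k)%N -> cancel (t i) (tinv i) /\ cancel (tinv i) (t i))
  (ht_ord : forall i, (i < k)%N -> (0 < ord i)%N -> iter (ord i) (t i) =1 id)
  (hmeas : forall w, reduced_word k ord w -> measurable_fun setT (word_act t tinv w))
  (hpres : forall w, reduced_word k ord w -> forall A, measurable A ->
              m (word_act t tinv w @^-1` A) = m A)
  (hfree : {ae m, forall x, forall w, reduced_word k ord w -> w != [::] ->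
              word_act t tinv w x != x}) :
  paradoxical_rule m k ord t tinv.
Proof.
have k0 : (0 < k)%N by apply: leq_trans hk.
have hord1 : forall i, (i < k)%N -> ord i != 1%N.
  move=> [|i] ik.
    by case: hord_tau => [->//|[_ h]]; apply/eqP => e; rewrite e in h.
  have hi : (1 <= i.+1 < k)%N by [].
  by case: (hord_sigma _ hi) => [->//|[_ h]]; apply/eqP => e; rewrite e in h.
have h3 : (3 %| ord 0)%N by case: hord_tau => [->|[]].
have h2 : forall j, (1 <= j < k)%N -> (2 %| ord j)%N.
  by move=> j hj; case: (hord_sigma _ hj) => [->|[]].
have tK : forall y, tinv 0%N (t 0%N y) = y := proj1 (ht_inv 0%N k0).
split.
  exists (colour k ord t tinv).
  rewrite /satisfies_rule; apply: filterS hfree => x hx.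
  apply: (colour_rule_free ht_inv ht_ord hord1 h3 h2 hk).
  by move=> w rw wn e; move: (hx w rw wn); rewrite e eqxx.
move=> [B [mu [c [alg fap inv ext [sat cmeas]]]]].
case: sat => N [mN mN0 sN].
pose wt : seq (nat * int) := [:: (0%N, 1)].
pose ws : seq (nat * int) := [:: (1%N, 1)].
have rwt : reduced_word k ord wt.
  rewrite /reduced_word /= /letter_ok /= k0 /= andbT.
  rewrite andbT; case: hord_tau => [->//|[h0 h]]; apply/orP; right.
  by case: (ord 0%N) h0 h => [|[|[|n]]].
have rws : reduced_word k ord ws.
  rewrite /reduced_word /= /letter_ok /= hk /= andbT.
  have hi : (1 <= 1 < k)%N by rewrite /= hk.
  rewrite andbT; case: (hord_sigma _ hi) => [->//|[h0 h]]; apply/orP; right.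
  by case: (ord 1%N) h0 h => [|[|n]].
have wtE x : word_act t tinv wt x = t 0%N x by [].
have wsE x : word_act t tinv ws x = t 1%N x by [].
have pre w A : reduced_word k ord w -> measurable A ->
    measurable (word_act t tinv w @^-1` A) /\ m (word_act t tinv w @^-1` A) = m A.
  move=> rw mA; split; last exact: hpres.
  by have := hmeas _ rw measurableT _ mA; rewrite setTI.
pose N1 := word_act t tinv wt @^-1` N.
pose N2 := word_act t tinv wt @^-1` N1.
have [mN1 mN10] := pre _ _ rwt mN.
have [mN2 mN20] := pre _ _ rwt mN1.
rewrite -/N1 mN0 in mN10; rewrite -/N2 -/N1 mN10 in mN20.
have null A : measurable A -> m A = 0%E -> B A /\ mu A = 0.
  move=> mA mA0; have [hB hm] := ext A mA; split => //.
  by move: hm; rewrite mA0 => -[].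
have [BN muN] := null _ mN mN0.
have [BN1 muN1] := null _ mN1 mN10.
have [BN2 muN2] := null _ mN2 mN20.
pose M := N `|` N1 `|` N2.
have BM : B M := BU alg (BU alg BN BN1) BN2.
have muM : mu M = 0.
  apply/eqP; rewrite eq_le (mu_ge0 fap BM) andbT.
  apply: le_trans (mu_subadd alg fap (BU alg BN BN1) BN2) _.
  rewrite muN2 addr0; apply: le_trans (mu_subadd alg fap BN BN1) _.
  by rewrite muN muN1 addr0.
have gd x : ~ M x -> c (t 0%N x) = col_next (c x) /\ ((c (t 1%N x) == ord0) = ~~ (c x == ord0)).
  move=> nM; apply: (@good X k t tinv c x tK hk).
  - case: (pselect (colour_rule t tinv k c x)) => // nr; exfalso; apply: nM.
    by left; left; apply: sN.
  - case: (pselect (colour_rule t tinv k c (t 0%N x))) => // nr; exfalso; apply: nM.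
    by left; right; apply: sN.
  - case: (pselect (colour_rule t tinv k c (t 0%N (t 0%N x)))) => // nr; exfalso; apply: nM.
    by right; apply: sN.
pose A j := c @^-1` [set j].
have tau_le j : mu (A j) <= mu (A (col_next j)).
  have [hB hmu] := inv _ rwt _ (cmeas (col_next j)).
  rewrite -hmu; apply: (mu_null_le alg fap (cmeas j) hB BM muM).
  move=> x /= cx; case: (pselect (M x)) => [Mx|nMx]; [by right | left].
  by change (c (t 0%N x) = col_next j); rewrite (gd x nMx).1 cx.
have [hBs hmus] := inv _ rws _ (cmeas ord0).
have [hBs' hmus'] := inv _ rws _ (BC alg (cmeas ord0)).
have sig1 : mu (A ord0) <= mu (~` A ord0).
  rewrite -hmus'; apply: (mu_null_le alg fap (cmeas ord0) hBs' BM muM).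
  move=> x /= cx; case: (pselect (M x)) => [Mx|nMx]; [by right | left].
  change (c (t 1%N x) <> ord0) => /eqP; have := (gd x nMx).2; rewrite cx eqxx => ->.
  by [].
have sig2 : mu (~` A ord0) <= mu (A ord0).
  rewrite -hmus; apply: (mu_null_le alg fap (BC alg (cmeas ord0)) hBs BM muM).
  move=> x /= cx; case: (pselect (M x)) => [Mx|nMx]; [by right | left].
  change (c (t 1%N x) = ord0); apply/eqP; rewrite (gd x nMx).2; apply/eqP => e; apply: cx.
  by rewrite /A /= e.
pose j1 : 'I_3 := col_next ord0.
pose j2 : 'I_3 := col_next j1.
have j3 : col_next j2 = ord0 by apply: val_inj.
have l1 := tau_le ord0; have l2 := tau_le j1; have l3 := tau_le j2.
rewrite -/j1 in l1; rewrite -/j2 in l2; rewrite j3 in l3.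
have cov : setT = A ord0 `|` A j1 `|` A j2.
  apply/seteqP; split => // x _; rewrite /A /=.
  by case: (c x) => [[|[|[|n]]] h]; [left; left | left; right | right | ]; try apply: val_inj.
have d01 : A ord0 `&` A j1 = set0.
  by apply/seteqP; split => // x [e1 e2]; move: e1 e2; rewrite /A /preimage /= => -> /(congr1 val).
have d2 : (A ord0 `|` A j1) `&` A j2 = set0.
  by apply/seteqP; split => // x [[e1|e1] e2]; move: e1 e2; rewrite /A /preimage /= => -> /(congr1 val).
have tot : mu (A ord0) + mu (A j1) + mu (A j2) = 1.
  rewrite -(muT fap) cov (muU fap (BU alg (cmeas _) (cmeas _)) (cmeas _) d2).
  by rewrite (muU fap (cmeas _) (cmeas _) d01).
rewrite (muC alg fap (cmeas ord0)) in sig1 sig2.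
rewrite -/(A ord0) in sig1 sig2.
move: tot l1 l2 l3 sig1 sig2.
exact: fin3.
Qed.
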